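(* Let $\lambda>0$, $\gamma>0$, and let $\beta_1=\beta_1(\gamma)$ be the unique positive solution of $\frac{\sqrt\pi}{2}\gamma x(1+x)^{1/2}(3+x)=1$. Let $h:[0,\lambda]\to\mathbb{R}$ be a bounded analytic function with $0\le h\le 1$, let $\eta\in[0,\lambda]$ and $b_1,b_2\in[0,\beta_1)$. Then $$\int_0^\eta\left|\frac{\exp\left(-2\int_0^x\frac{\xi}{1+b_1h(\xi)}d\xi\right)}{1+b_1h(x)}-\frac{\exp\left(-2\int_0^x\frac{\xi}{1+b_2h(\xi)}d\xi\right)}{1+b_2h(x)}\right|dx\le\frac{1}{2\gamma\beta_1}|b_1-b_2|.$$ *)

(* Defs.v *)
From Stdlib Require Import Reals.
From Coquelicot Require Import Coquelicot.
Open Scope R_scope.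

Definition analytic_on (h : R -> R) (a b : R) : Prop :=
  forall x0, a <= x0 <= b ->
    exists (c : nat -> R) (r : R), 0 < r /\
      forall x, a <= x <= b -> Rabs (x - x0) < r ->
        is_pseries c (x - x0) (h x).

Definition Fb (h : R -> R) (b x : R) : R :=
  exp (-2 * RInt (fun xi => xi / (1 + b * h xi)) 0 x) / (1 + b * h x).

(* Main.v *)
Require Import Defs.
From Stdlib Require Import Reals Lra.
From Coquelicot Require Import Coquelicot.
Open Scope R_scope.

Lemma exists_other (x0 r lam : R) : 0 < r -> 0 < lam -> 0 <= x0 <= lam ->
  exists y, 0 <= y <= lam /\ Rabs (y - x0) < r /\ y <> x0.
Proof.
  intros Hr Hl Hx.
  destruct (Rlt_le_dec x0 lam) as [H|H].
  - exists (x0 + Rmin r (lam - x0) / 2).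
    assert (H1 := Rmin_l r (lam - x0)). assert (H2 := Rmin_r r (lam - x0)).
    assert (H3 : 0 < Rmin r (lam - x0)) by (apply Rmin_glb_lt; lra).
    rewrite Rabs_pos_eq; lra.
  - exists (x0 - Rmin r lam / 2).
    assert (H1 := Rmin_l r lam). assert (H2 := Rmin_r r lam).
    assert (H3 : 0 < Rmin r lam) by (apply Rmin_glb_lt; lra).
    rewrite Rabs_left; lra.
Qed.

Lemma cont_within (h : R -> R) (lam : R) : 0 < lam -> analytic_on h 0 lam ->
  forall x0, 0 <= x0 <= lam -> forall eps, 0 < eps -> exists d, 0 < d /\
    forall x, 0 <= x <= lam -> Rabs (x - x0) < d -> Rabs (h x - h x0) < eps.
Proof.
  intros Hl Hana x0 Hx0 eps He.
  destruct (Hana x0 Hx0) as [c [r [Hr Hs]]].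
  destruct (exists_other x0 r lam Hr Hl Hx0) as [y [Hy1 [Hy2 Hy3]]].
  assert (HR : Rbar_lt 0 (CV_radius c)).
  { assert (Hle : Rbar_le (Rabs (y - x0)) (CV_radius c)).
    { apply Rbar_not_lt_le. intro Hlt. apply (CV_disk_outside c (y - x0) Hlt).
      assert (Hex : ex_series (fun k => scal (pow_n (y - x0) k) (c k))).
      { exists (h y). apply Hs; auto. }
      apply ex_series_lim_0 in Hex.
      eapply is_lim_seq_ext; [|exact Hex]. intro n. simpl.
      rewrite pow_n_pow. unfold scal; simpl. unfold mult; simpl. ring. }
    eapply Rbar_lt_le_trans; [|exact Hle]. simpl.
    apply Rabs_pos_lt. lra. }
  assert (HC : continuity_pt (PSeries c) 0).
  { apply PSeries_continuity. rewrite Rabs_R0. exact HR. }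
  unfold continuity_pt, continue_in, limit1_in, limit_in in HC.
  destruct (HC eps He) as [d1 [Hd1 Hd]].
  exists (Rmin d1 r). split. { apply Rmin_glb_lt; lra. }
  intros x Hx Hxd.
  assert (E0 : h x0 = PSeries c 0).
  { symmetry. apply is_pseries_unique. replace 0 with (x0 - x0) by ring.
    apply Hs; auto. rewrite Rminus_diag, Rabs_R0. lra. }
  assert (E1 : h x = PSeries c (x - x0)).
  { symmetry. apply is_pseries_unique. apply Hs; auto.
    assert (H := Rmin_r d1 r). lra. }
  destruct (Req_dec x x0) as [Heq|Hne].
  { subst. rewrite Rminus_diag, Rabs_R0. exact He. }
  rewrite E0, E1. apply (Hd (x - x0)). split.
  - split. exact I. intro H'. apply Hne. lra.
  - simpl. unfold R_dist. rewrite Rminus_0_r. assert (H := Rmin_l d1 r). lra.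
Qed.

Definition clamp (l x : R) := Rmax 0 (Rmin l x).

Lemma clamp_in l x : 0 <= l -> 0 <= clamp l x <= l.
Proof. intros. unfold clamp, Rmax, Rmin. repeat destruct Rle_dec; lra. Qed.

Lemma clamp_id l x : 0 <= x <= l -> clamp l x = x.
Proof. intros. unfold clamp, Rmax, Rmin. repeat destruct Rle_dec; lra. Qed.

Lemma clamp_lip l y x : 0 <= l -> Rabs (clamp l y - clamp l x) <= Rabs (y - x).
Proof.
  intros. unfold clamp, Rmax, Rmin. repeat destruct Rle_dec;
  unfold Rabs; repeat destruct Rcase_abs; lra.
Qed.

Lemma clamp_cont (h : R -> R) (lam : R) : 0 < lam -> analytic_on h 0 lam ->
  forall x, continuous (fun y => h (clamp lam y)) x.
Proof.
  intros Hl Hana x. apply continuity_pt_filterlim.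
  unfold continuity_pt, continue_in, limit1_in, limit_in.
  intros eps He.
  destruct (cont_within h lam Hl Hana (clamp lam x) (clamp_in lam x (Rlt_le _ _ Hl)) eps He)
    as [d [Hd H]].
  exists d. split. lra.
  intros y [_ Hy]. simpl in *. unfold R_dist in *.
  apply H. apply clamp_in; lra.
  eapply Rle_lt_trans. apply clamp_lip; lra. exact Hy.
Qed.
Lemma exp_le x y : x <= y -> exp x <= exp y.
Proof. intros [H|H]. left; apply exp_increasing; auto. subst; lra. Qed.

Lemma q_mono s t : 1 <= s <= t -> t * exp (- t) <= s * exp (- s).
Proof.
  intros [H1 H2].
  assert (E : exp (- s) = exp (- t) * exp (t - s)).
  { rewrite <- exp_plus. f_equal. ring. }
  rewrite E. assert (H3 := exp_ineq1_le (t - s)). assert (H4 := exp_pos (- t)).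
  assert (t <= s * exp (t - s)) by nra. nra.
Qed.

Definition phi s := exp (- s) * Rmax 1 s.

Lemma phi_mono s t : 0 <= s <= t -> phi t <= phi s.
Proof.
  intros [H1 H2]. unfold phi.
  destruct (Rle_dec t 1).
  - rewrite !Rmax_left by lra. apply Rmult_le_compat_r. lra. apply exp_le; lra.
  - rewrite (Rmax_right 1 t) by lra.
    destruct (Rle_dec 1 s).
    + rewrite Rmax_right by lra. rewrite !(Rmult_comm (exp _)). apply q_mono; lra.
    + rewrite Rmax_left by lra.
      assert (H := q_mono 1 t ltac:(lra)).
      assert (exp (- (1)) <= exp (- s)) by (apply exp_le; lra).
      rewrite Rmult_1_l in H. rewrite Rmult_1_r, Rmult_comm. lra.
Qed.

Lemma abs_diff_max A B : 0 <= A -> 0 <= B -> Rabs (A - B) <= Rmax A B.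
Proof. intros. unfold Rmax. destruct Rle_dec; unfold Rabs; destruct Rcase_abs; lra. Qed.

Lemma key_alg g1 g2 hx b1 b2 : 0 <= b1 <= b2 -> 0 <= hx <= 1 -> 0 <= g2 -> g2 <= g1 ->
  g1 <= (1 + b2 - b1) * g2 ->
  Rabs (exp (-2 * g1) / (1 + b1 * hx) - exp (-2 * g2) / (1 + b2 * hx))
   <= (b2 - b1) * phi (2 * g2).
Proof.
  intros Hb Hh Hg2 Hg Hd. unfold phi.
  set (E1 := exp (-2 * g1)). set (E2 := exp (-2 * g2)).
  set (q1 := / (1 + b1 * hx)). set (q2 := / (1 + b2 * hx)).
  assert (P1 : 1 <= 1 + b1 * hx) by nra. assert (P2 : 1 <= 1 + b2 * hx) by nra.
  assert (Q1 : 0 < q1 <= 1).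
  { unfold q1. split. apply Rinv_0_lt_compat; lra. rewrite <- Rinv_1. apply Rinv_le_contravar; lra. }
  assert (Q2 : 0 < q2 <= 1).
  { unfold q2. split. apply Rinv_0_lt_compat; lra. rewrite <- Rinv_1. apply Rinv_le_contravar; lra. }
  assert (Qd : q1 - q2 = (b2 - b1) * hx * q1 * q2).
  { unfold q1, q2. field. lra. }
  assert (Qd1 : 0 <= q1 - q2 <= b2 - b1).
  { rewrite Qd. split. apply Rmult_le_pos. apply Rmult_le_pos. apply Rmult_le_pos. lra. lra. lra. lra.
    assert (0 <= hx * q1 * q2 <= 1).
    { split. apply Rmult_le_pos. apply Rmult_le_pos; lra. lra.
      assert (hx * q1 <= 1) by nra. nra. }
    nra. }
  assert (HE1 : E1 = E2 * exp (-2 * (g1 - g2))).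
  { unfold E1, E2. rewrite <- exp_plus. f_equal. ring. }
  assert (E2p : 0 < E2) by apply exp_pos.
  assert (E1p : 0 < E1) by apply exp_pos.
  assert (Hex := exp_ineq1_le (-2 * (g1 - g2))).
  assert (E12 : E1 <= E2).
  { unfold E1, E2. apply exp_le. lra. }
  assert (E21 : E2 - E1 <= E2 * (2 * (g1 - g2))).
  { rewrite HE1. nra. }
  replace (exp (- (2 * g2))) with E2 by (unfold E2; f_equal; ring).
  replace (E1 / (1 + b1 * hx) - E2 / (1 + b2 * hx)) with (E1 * (q1 - q2) - (E2 - E1) * q2)
    by (unfold q1, q2, Rdiv; ring).
  eapply Rle_trans. apply abs_diff_max. nra. nra.
  assert (M1 := Rmax_l 1 (2 * g2)). assert (M2 := Rmax_r 1 (2 * g2)).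
  apply Rmax_lub.
  - assert (E1 * (q1 - q2) <= E1 * (b2 - b1)) by (apply Rmult_le_compat_l; lra).
    assert (E1 * (b2 - b1) <= E2 * (b2 - b1)) by (apply Rmult_le_compat_r; lra).
    assert (E2 <= E2 * Rmax 1 (2 * g2)) by nra.
    assert ((b2 - b1) * E2 <= (b2 - b1) * (E2 * Rmax 1 (2 * g2))) by (apply Rmult_le_compat_l; lra).
    lra.
  - assert ((E2 - E1) * q2 <= E2 - E1) by nra.
    assert (g1 - g2 <= (b2 - b1) * g2) by nra.
    assert (E2 * (2 * (g1 - g2)) <= E2 * ((b2 - b1) * (2 * g2))) by nra.
    assert (0 <= b2 - b1) by lra.
    assert ((b2 - b1) * (2 * g2) <= (b2 - b1) * Rmax 1 (2 * g2)) by nra.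
    nra.
Qed.

Lemma cmul (f g : R -> R) x : continuous f x -> continuous g x -> continuous (fun y => f y * g y) x.
Proof. intros. apply (continuous_mult f g x); auto. Qed.
Lemma cplus (f g : R -> R) x : continuous f x -> continuous g x -> continuous (fun y => f y + g y) x.
Proof. intros. apply (continuous_plus f g x); auto. Qed.
Lemma cminus (f g : R -> R) x : continuous f x -> continuous g x -> continuous (fun y => f y - g y) x.
Proof. intros. apply (continuous_minus f g x); auto. Qed.
Lemma cconst (c : R) x : continuous (fun _ : R => c) x.
Proof. apply continuous_const. Qed.
Lemma cid x : continuous (fun y : R => y) x.
Proof. apply continuous_id. Qed.

Section S.
Variable ht : R -> R.
Hypothesis hc : forall x, continuous ht x.
Hypothesis hb : forall x, 0 <= ht x <= 1.

Definition ig (b : R) := fun xi => xi / (1 + b * ht xi).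

Lemma ig_cont b x : 0 <= b -> continuous (ig b) x.
Proof.
  intros Hb. unfold ig, Rdiv. apply cmul. apply cid.
  apply continuous_Rinv_comp. apply cplus. apply cconst. apply cmul. apply cconst. apply hc.
  specialize (hb x). nra.
Qed.

Lemma ig_ex b u v : 0 <= b -> ex_RInt (ig b) u v.
Proof. intros. apply (@ex_RInt_continuous R_CompleteNormedModule). intros. apply ig_cont; auto. Qed.

Definition G b x := RInt (ig b) 0 x.

Lemma G_cont b x : 0 <= b -> continuous (G b) x.
Proof.
  intros Hb. apply (@ex_derive_continuous R_AbsRing R_NormedModule). exists (ig b x).
  apply (is_derive_RInt (ig b) (G b) 0 x).
  - apply filter_forall. intro y. apply (@RInt_correct R_CompleteNormedModule). apply ig_ex; auto.
  - apply ig_cont; auto.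
Qed.

Definition F b x := exp (-2 * G b x) / (1 + b * ht x).

Lemma F_cont b x : 0 <= b -> continuous (F b) x.
Proof.
  intros Hb. unfold F, Rdiv. apply cmul.
  - apply continuous_exp_comp. apply cmul. apply cconst. apply G_cont; auto.
  - apply continuous_Rinv_comp. apply cplus. apply cconst. apply cmul. apply cconst. apply hc.
    specialize (hb x). nra.
Qed.

Lemma D_ex b1 b2 u v : 0 <= b1 -> 0 <= b2 -> ex_RInt (fun x => Rabs (F b1 x - F b2 x)) u v.
Proof.
  intros. apply (@ex_RInt_continuous R_CompleteNormedModule). intros. apply continuous_Rabs_comp.
  apply cminus; apply F_cont; auto.
Qed.

End S.

Lemma RInt_lin c x : 0 < c -> RInt (fun xi => xi / c) 0 x = x * x / (2 * c).
Proof.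
  intros Hc.
  assert (H : is_RInt (fun xi => xi / c) 0 x (minus (x * x / (2 * c)) (0 * 0 / (2 * c)))).
  { apply (@is_RInt_derive R_CompleteNormedModule (fun y => y * y / (2 * c))).
    - intros y _. auto_derive. auto. field. lra.
    - intros y _. unfold Rdiv. apply cmul. apply cid. apply cconst. }
  apply (@is_RInt_unique R_CompleteNormedModule) in H. rewrite H. unfold minus, plus, opp; simpl. field. lra.
Qed.

Section S2.
Variable ht : R -> R.
Hypothesis hc : forall x, continuous ht x.
Hypothesis hb : forall x, 0 <= ht x <= 1.

Lemma G_lower b beta x : 0 <= b <= beta -> 0 <= x ->
  x * x / (2 * (1 + beta)) <= G ht b x.
Proof.
  intros Hb Hx. rewrite <- RInt_lin by lra. unfold G.
  apply RInt_le. auto.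
  apply (@ex_RInt_continuous R_CompleteNormedModule). intros. unfold Rdiv. apply cmul. apply cid. apply cconst.
  apply ig_ex; auto; lra.
  intros xi Hxi. unfold ig. unfold Rdiv. apply Rmult_le_compat_l. lra.
  apply Rinv_le_contravar. specialize (hb xi). nra. specialize (hb xi). nra.
Qed.

Lemma G_mono b1 b2 x : 0 <= b1 <= b2 -> 0 <= x -> G ht b2 x <= G ht b1 x.
Proof.
  intros Hb Hx. unfold G. apply RInt_le. auto. apply ig_ex; auto; lra. apply ig_ex; auto; lra.
  intros xi Hxi. unfold ig. unfold Rdiv. apply Rmult_le_compat_l. lra.
  apply Rinv_le_contravar. specialize (hb xi). nra. specialize (hb xi). nra.
Qed.

Lemma G_diff b1 b2 x : 0 <= b1 <= b2 -> 0 <= x -> G ht b1 x <= (1 + b2 - b1) * G ht b2 x.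
Proof.
  intros Hb Hx. unfold G.
  change ((1 + b2 - b1) * RInt (ig ht b2) 0 x) with (scal (1 + b2 - b1) (RInt (ig ht b2) 0 x)).
  rewrite <- (@RInt_scal R_CompleteNormedModule) by (apply ig_ex; auto; lra).
  apply RInt_le. auto. apply ig_ex; auto; lra.
  apply (@ex_RInt_continuous R_CompleteNormedModule). intros.
  apply (cmul (fun _ => 1 + b2 - b1) (ig ht b2)). apply cconst. apply ig_cont; auto; lra.
  intros xi Hxi. unfold ig. change (scal (1 + b2 - b1) (xi / (1 + b2 * ht xi))) with
    ((1 + b2 - b1) * (xi / (1 + b2 * ht xi))).
  specialize (hb xi).
  assert (A : 0 < 1 + b1 * ht xi) by nra. assert (B : 0 < 1 + b2 * ht xi) by nra.
  replace (xi / (1 + b1 * ht xi)) with (xi * (1 + b2 * ht xi) * / ((1 + b1 * ht xi) * (1 + b2 * ht xi))) by (field; lra).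
  replace ((1 + b2 - b1) * (xi / (1 + b2 * ht xi))) with ((1 + b2 - b1) * xi * (1 + b1 * ht xi) * / ((1 + b1 * ht xi) * (1 + b2 * ht xi))) by (field; lra).
  apply Rmult_le_compat_r. left. apply Rinv_0_lt_compat. nra.
  assert (0 <= xi * ((b2 - b1) * (1 - ht xi) + (b2 - b1) * b1 * ht xi)).
  { apply Rmult_le_pos. lra. apply Rplus_le_le_0_compat. apply Rmult_le_pos; lra.
    apply Rmult_le_pos. apply Rmult_le_pos; lra. lra. }
  nra.
Qed.

Lemma pointwise b1 b2 beta x : 0 <= b1 <= b2 -> b2 <= beta -> 0 <= x ->
  Rabs (F ht b1 x - F ht b2 x) <= (b2 - b1) * phi (x * x / (1 + beta)).
Proof.
  intros Hb Hbe Hx. unfold F.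
  assert (L := G_lower b2 beta x ltac:(lra) Hx).
  assert (M := G_mono b1 b2 x Hb Hx).
  assert (D := G_diff b1 b2 x Hb Hx).
  assert (0 <= x * x / (2 * (1 + beta))) by (apply Rmult_le_pos; [nra| left; apply Rinv_0_lt_compat; lra]).
  eapply Rle_trans. apply key_alg; auto; lra.
  apply Rmult_le_compat_l. lra. apply phi_mono. split.
  apply Rmult_le_pos. nra. left; apply Rinv_0_lt_compat; lra.
  replace (x * x / (1 + beta)) with (2 * (x * x / (2 * (1 + beta)))) by (field; lra). lra.
Qed.

End S2.

Lemma exp1_lb : 2.56 <= exp 1.
Proof.
  assert (H1 := exp_ineq1_le (1/8)).
  assert (E1 : exp (1/4) = exp (1/8) * exp (1/8)) by (rewrite <- exp_plus; f_equal; field).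
  assert (E2 : exp (1/2) = exp (1/4) * exp (1/4)) by (rewrite <- exp_plus; f_equal; field).
  assert (E3 : exp 1 = exp (1/2) * exp (1/2)) by (rewrite <- exp_plus; f_equal; field).
  assert (A : 81/64 <= exp (1/4)) by (rewrite E1; nra).
  assert (B : 6561/4096 <= exp (1/2)) by (rewrite E2; nra).
  rewrite E3. nra.
Qed.

Lemma sqrtPI_lb : 1.73 <= sqrt PI.
Proof.
  assert (H := PI2_3_2).
  rewrite <- (sqrt_square 1.73) by lra. apply sqrt_le_1; nra.
Qed.

Section S3.
Variable ht : R -> R.
Hypothesis hc : forall x, continuous ht x.
Hypothesis hb : forall x, 0 <= ht x <= 1.

Lemma main_le b1 b2 beta eta : 0 <= b1 <= b2 -> b2 <= beta -> 0 <= eta ->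
  RInt (fun x => Rabs (F ht b1 x - F ht b2 x)) 0 eta
    <= (b2 - b1) * (sqrt (1 + beta) * (1 + 3 / 4 * exp (-1))).
Proof.
  intros Hb Hbe Heta.
  set (k := sqrt (1 + beta)).
  assert (Hk : 0 < k) by (apply sqrt_lt_R0; lra).
  assert (Hkk : k * k = 1 + beta) by (apply sqrt_sqrt; lra).
  set (D := fun x => Rabs (F ht b1 x - F ht b2 x)).
  assert (Dex : forall u v, ex_RInt D u v) by (intros; apply D_ex; auto; lra).
  assert (Ee : 0 < exp (-1)) by apply exp_pos.
  assert (Plow : forall x, 0 <= x <= k -> D x <= b2 - b1).
  { intros x Hx. unfold D. eapply Rle_trans. apply (pointwise ht hc hb b1 b2 beta x); auto; lra.
    rewrite <- Hkk. unfold phi.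
    assert (Hs : 0 <= x * x / (k * k) <= 1).
    { split. apply Rmult_le_pos. nra. left; apply Rinv_0_lt_compat; nra.
      apply (Rmult_le_reg_r (k * k)). nra. unfold Rdiv. rewrite Rmult_assoc, Rinv_l by nra. nra. }
    rewrite Rmax_left by lra.
    assert (exp (- (x * x / (k * k))) <= 1) by (rewrite <- exp_0; apply exp_le; lra).
    assert (0 <= b2 - b1) by lra. nra. }
  destruct (Rle_dec eta k) as [Hek|Hek].
  - apply Rle_trans with (RInt (fun _ => b2 - b1) 0 eta).
    + apply RInt_le; auto. apply ex_RInt_const.
      intros x Hx. apply Plow. lra.
    + rewrite RInt_const. change (scal (eta - 0) (b2 - b1)) with ((eta - 0) * (b2 - b1)).
      assert (0 <= 3 / 4 * exp (-1)) by lra.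
      assert (0 <= b2 - b1) by lra.
      assert (eta * (b2 - b1) <= k * (b2 - b1)) by (apply Rmult_le_compat_r; lra).
      assert (k * (b2 - b1) <= k * (1 + 3 / 4 * exp (-1)) * (b2 - b1)).
      { apply Rmult_le_compat_r. lra. assert (k * 1 <= k * (1 + 3 / 4 * exp (-1))) by (apply Rmult_le_compat_l; lra). lra. }
      replace (eta - 0) with eta by ring. rewrite (Rmult_comm (b2 - b1)). lra.
  - set (T := fun x => (b2 - b1) * ((x / (2 * k)) * (1 + x * x / (k * k)) * exp (- (x * x / (k * k))))).
    set (Gf := fun x => (b2 - b1) * (- k * (x * x / (k * k) + 2) * exp (- (x * x / (k * k))) / 4)).
    assert (Phi : forall x, k <= x -> D x <= T x).
    { intros x Hx. unfold D. eapply Rle_trans. apply (pointwise ht hc hb b1 b2 beta x); auto; lra.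
      rewrite <- Hkk. unfold phi, T.
      set (u := x / k).
      assert (Hu : 1 <= u).
      { unfold u. apply (Rmult_le_reg_r k). lra. unfold Rdiv. rewrite Rmult_assoc, Rinv_l by lra. lra. }
      replace (x * x / (k * k)) with (u * u) by (unfold u; field; lra).
      rewrite Rmax_right by nra.
      assert (Hp := exp_pos (- (u * u))).
      assert (0 <= b2 - b1) by lra.
      assert (0 <= u * ((u - 1) * (u - 1))) by (apply Rmult_le_pos; nra).
      assert (u * u <= u / 2 * (1 + u * u)) by nra.
      replace (x / (2 * k)) with (u / 2) by (unfold u; field; lra).
      apply Rmult_le_compat_l. lra. nra. }
    assert (IT : is_RInt T k eta (minus (Gf eta) (Gf k))).
    { apply (@is_RInt_derive R_CompleteNormedModule).
      - intros x _. unfold Gf, T. auto_derive. auto. unfold Rdiv. field. lra.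
      - intros x _. apply (@ex_derive_continuous R_AbsRing R_NormedModule). unfold T. auto_derive. auto. }
    rewrite <- (RInt_Chasles D 0 k eta) by auto.
    change (plus (RInt D 0 k) (RInt D k eta)) with (RInt D 0 k + RInt D k eta).
    assert (I1 : RInt D 0 k <= k * (b2 - b1)).
    { apply Rle_trans with (RInt (fun _ => b2 - b1) 0 k).
      + apply RInt_le; auto. lra. apply ex_RInt_const.
        intros x Hx. apply Plow. lra.
      + rewrite RInt_const. change (scal (k - 0) (b2 - b1)) with ((k - 0) * (b2 - b1)). lra. }
    assert (I2 : RInt D k eta <= minus (Gf eta) (Gf k)).
    { rewrite <- (@is_RInt_unique R_CompleteNormedModule T k eta _ IT).
      apply RInt_le; auto. lra. exists (minus (Gf eta) (Gf k)); exact IT.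
      intros x Hx. apply Phi. lra. }
    assert (G1 : Gf eta <= 0).
    { unfold Gf. assert (0 <= b2 - b1) by lra.
      assert (Hp := exp_pos (- (eta * eta / (k * k)))).
      assert (0 <= eta * eta / (k * k)) by (apply Rmult_le_pos; [nra | left; apply Rinv_0_lt_compat; nra]).
      assert (0 <= k * (eta * eta / (k * k) + 2) * exp (- (eta * eta / (k * k))) / 4).
      { apply Rmult_le_pos. apply Rmult_le_pos. apply Rmult_le_pos. lra. lra. lra. lra. }
      nra. }
    assert (G2 : Gf k = - ((b2 - b1) * (k * (3 / 4 * exp (-1))))).
    { unfold Gf. replace (k * k / (k * k)) with 1 by (field; lra).
      replace (- (1)) with (-1) by ring. field. }
    change (minus (Gf eta) (Gf k)) with (Gf eta - Gf k) in I2.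
    nra.
Qed.

End S3.

Lemma Fb_eq h lam b x : 0 <= lam -> 0 <= x <= lam ->
  Fb h b x = F (fun y => h (clamp lam y)) b x.
Proof.
  intros Hl Hx. unfold Fb, F, G, ig.
  rewrite (clamp_id lam x Hx). f_equal. f_equal. f_equal.
  apply RInt_ext. intros xi Hxi. rewrite Rmin_left in Hxi by lra. rewrite Rmax_right in Hxi by lra.
  rewrite clamp_id by lra. reflexivity.
Qed.

Lemma bound_K gam beta1 : 0 < gam -> 0 < beta1 ->
  sqrt PI / 2 * gam * beta1 * sqrt (1 + beta1) * (3 + beta1) = 1 ->
  sqrt (1 + beta1) * (1 + 3 / 4 * exp (-1)) <= / (2 * gam * beta1).
Proof.
  intros Hg Hb Heq.
  set (k := sqrt (1 + beta1)) in *. set (S := sqrt PI) in *.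
  assert (Hk : 0 < k) by (apply sqrt_lt_R0; lra).
  assert (E : / (2 * gam * beta1) = S / 4 * k * (3 + beta1)).
  { rewrite <- (Rmult_1_l (/ _)). rewrite <- Heq. field. lra. }
  rewrite E.
  assert (HS := sqrtPI_lb). fold S in HS.
  assert (He := exp1_lb).
  assert (Ee : exp (-1) <= / 2.56).
  { replace (-1) with (- (1)) by ring. rewrite exp_Ropp. apply Rinv_le_contravar; lra. }
  assert (1 + 3 / 4 * exp (-1) <= S / 4 * (3 + beta1)).
  { assert (S * (3 + beta1) >= 1.73 * 3) by nra. lra. }
  replace (S / 4 * k * (3 + beta1)) with (k * (S / 4 * (3 + beta1))) by ring.
  apply Rmult_le_compat_l; lra.
Qed.

Theorem lemma3p8 (lam gam beta1 : R) (h : R -> R) (eta b1 b2 : R)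
  (Hlam : 0 < lam) (Hgam : 0 < gam)
  (Hbeta1 : 0 < beta1)
  (Hbeta1_eq : sqrt PI / 2 * gam * beta1 * sqrt (1 + beta1) * (3 + beta1) = 1)
  (Hbeta1_uniq : forall x, 0 < x ->
      sqrt PI / 2 * gam * x * sqrt (1 + x) * (3 + x) = 1 -> x = beta1)
  (Hana : analytic_on h 0 lam)
  (Hbnd : exists M, forall x, 0 <= x <= lam -> Rabs (h x) <= M)
  (Hh : forall x, 0 <= x <= lam -> 0 <= h x <= 1)
  (Heta : 0 <= eta <= lam)
  (Hb1 : 0 <= b1 < beta1) (Hb2 : 0 <= b2 < beta1) :
  RInt (fun x => Rabs (Fb h b1 x - Fb h b2 x)) 0 eta
    <= / (2 * gam * beta1) * Rabs (b1 - b2).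
Proof.
  set (ht := fun y => h (clamp lam y)).
  assert (hc : forall x, continuous ht x) by (apply clamp_cont; auto).
  assert (hb : forall x, 0 <= ht x <= 1).
  { intro x. apply Hh. apply clamp_in. lra. }
  assert (HK := bound_K gam beta1 Hgam Hbeta1 Hbeta1_eq).
  rewrite (RInt_ext _ (fun x => Rabs (F ht b1 x - F ht b2 x))).
  2:{ intros x Hx. rewrite Rmin_left in Hx by lra. rewrite Rmax_right in Hx by lra.
      rewrite !(Fb_eq h lam) by lra. reflexivity. }
  destruct (Rle_dec b1 b2) as [H|H].
  - eapply Rle_trans. apply (main_le ht hc hb b1 b2 beta1 eta); lra.
    rewrite Rabs_minus_sym, Rabs_pos_eq by lra.
    rewrite Rmult_comm. apply Rmult_le_compat_r; lra.
  - rewrite (RInt_ext _ (fun x => Rabs (F ht b2 x - F ht b1 x))).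
    2:{ intros x _. apply Rabs_minus_sym. }
    eapply Rle_trans. apply (main_le ht hc hb b2 b1 beta1 eta); lra.
    rewrite Rabs_pos_eq by lra.
    rewrite Rmult_comm. apply Rmult_le_compat_r; lra.
Qed.
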